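(* Let $(X,d)$ be a compact metric space, $\mathbb{F}=\{f_n:n\in\mathbb{N}\}$ a commutative family of continuous bijective self-maps of $X$, and let $\mathbb{G}$ be a finite rearrangement of $\mathbb{F}$. Then for $x,y\in X$, $(x,y)$ is proximal for $(X,\mathbb{F})$ if and only if $(x,y)$ is proximal for $(X,\mathbb{G})$.
   Context: For a family $\mathbb{H}=\{h_n\}$ write $\omega_n=h_n\circ\cdots\circ h_1$; a pair $(x,y)$ is proximal for $(X,\mathbb{H})$ if $\liminf_{n\to\infty}d(\omega_n(x),\omega_n(y))=0$. $\mathbb{F}$ is commutative if $f_i\circ f_j=f_j\circ f_i$ for all $i,j$. $\mathbb{G}=\{g_n\}$ is a finite rearrangement of $\mathbb{F}$ if $g_n=f_{\pi(n)}$ for a bijection $\pi:\mathbb{N}\to\mathbb{N}$ fixing all but finitely many $n$. *)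

(* Defs.v *)
From Stdlib Require Import Reals List.
Open Scope R_scope.

Record is_metric (X : Type) (d : X -> X -> R) : Prop := {
  metric_nonneg : forall x y, 0 <= d x y;
  metric_eq0 : forall x y, d x y = 0 <-> x = y;
  metric_sym : forall x y, d x y = d y x;
  metric_triangle : forall x y z, d x z <= d x y + d y z
}.

Definition m_open {X : Type} (d : X -> X -> R) (U : X -> Prop) : Prop :=
  forall x, U x -> exists e, 0 < e /\ forall y, d x y < e -> U y.

Definition m_compact {X : Type} (d : X -> X -> R) : Prop :=
  forall (I : Type) (U : I -> X -> Prop),
    (forall i, m_open d (U i)) ->
    (forall x, exists i, U i x) ->
    exists l : list I, forall x, exists i, In i l /\ U i x.

Definition m_continuous {X : Type} (d : X -> X -> R) (f : X -> X) : Prop :=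
  forall x e, 0 < e -> exists dl, 0 < dl /\ forall y, d x y < dl -> d (f x) (f y) < e.

Definition bijective_map {X : Type} (f : X -> X) : Prop :=
  exists g : X -> X, (forall x, g (f x) = x) /\ (forall y, f (g y) = y).

(* omega h n = h_n o ... o h_1 ; families indexed by positive naturals,
   with h : nat -> X -> X and h_k := h k for k >= 1 (h 0 unused). *)
Fixpoint omega {X : Type} (h : nat -> X -> X) (n : nat) (x : X) : X :=
  match n with
  | O => x
  | S m => h (S m) (omega h m x)
  end.

(* liminf_{n->oo} d(omega_n x, omega_n y) = 0  (d >= 0) *)
Definition proximal {X : Type} (d : X -> X -> R) (h : nat -> X -> X) (x y : X) : Prop :=
  forall e, 0 < e -> forall N, exists n, (N <= n)%nat /\ d (omega h n x) (omega h n y) < e.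

Definition commutative_family {X : Type} (f : nat -> X -> X) : Prop :=
  forall i j, (1 <= i)%nat -> (1 <= j)%nat -> forall x, f i (f j x) = f j (f i x).

Definition finite_rearrangement {X : Type} (f g : nat -> X -> X) : Prop :=
  exists pi : nat -> nat,
    (forall n, (1 <= n)%nat -> (1 <= pi n)%nat) /\
    (forall m n, (1 <= m)%nat -> (1 <= n)%nat -> pi m = pi n -> m = n) /\
    (forall m, (1 <= m)%nat -> exists n, (1 <= n)%nat /\ pi n = m) /\
    (exists K, forall n, (K <= n)%nat -> pi n = n) /\
    (forall n, (1 <= n)%nat -> g n = f (pi n)).

(* Main.v *)
Require Import Defs.
From Stdlib Require Import Reals List Permutation Lia.
Open Scope R_scope.

Fixpoint down (n : nat) : list nat :=
  match n with O => nil | S m => S m :: down m end.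

Definition comp {X : Type} (h : nat -> X -> X) (l : list nat) (x : X) : X :=
  fold_right (fun i acc => h i acc) x l.

Lemma omega_comp {X : Type} (h : nat -> X -> X) n x : omega h n x = comp h (down n) x.
Proof. induction n; simpl; [reflexivity| now rewrite IHn]. Qed.

Lemma in_down n i : In i (down n) <-> (1 <= i <= n)%nat.
Proof. induction n; simpl; [lia|]. rewrite IHn. lia. Qed.

Lemma nodup_down n : NoDup (down n).
Proof. induction n; simpl; constructor; auto. rewrite in_down. lia. Qed.

Lemma comp_perm {X : Type} (f : nat -> X -> X) (hcomm : commutative_family f) :
  forall l l', Permutation l l' -> Forall (fun i => (1 <= i)%nat) l ->
  forall x, comp f l x = comp f l' x.
Proof.
  intros l l' P. induction P; intros HF z; simpl.
  - reflexivity.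
  - inversion HF; subst. now rewrite IHP.
  - inversion HF; subst. inversion H2; subst. apply hcomm; auto.
  - rewrite IHP1 by auto. apply IHP2. eapply Permutation_Forall; eauto.
Qed.

Lemma comp_map {X : Type} (f g : nat -> X -> X) pi :
  (forall n, (1 <= n)%nat -> g n = f (pi n)) ->
  forall l, Forall (fun i => (1 <= i)%nat) l -> forall x, comp g l x = comp f (map pi l) x.
Proof.
  intros H l HF x. induction HF; simpl; auto. rewrite IHHF, H; auto.
Qed.

Theorem mainTheorem10 (X : Type) (d : X -> X -> R) (f g : nat -> X -> X)
  (hd : is_metric X d) (hc : m_compact d)
  (hcont : forall n, (1 <= n)%nat -> m_continuous d (f n))
  (hbij : forall n, (1 <= n)%nat -> bijective_map (f n))
  (hcomm : commutative_family f)
  (hrearr : finite_rearrangement f g) :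
  forall x y : X, proximal d f x y <-> proximal d g x y.
Proof.
  destruct hrearr as (pi & Hp1 & Hinj & _ & (K & HK) & Hg).
  assert (Heq : forall n z, (K <= n)%nat -> omega g n z = omega f n z).
  { intros n z Hn. rewrite !omega_comp.
    assert (HF : Forall (fun i => (1 <= i)%nat) (down n)).
    { apply Forall_forall. intros i Hi. apply in_down in Hi. lia. }
    rewrite (comp_map f g pi Hg _ HF).
    apply comp_perm; auto.
    - apply Permutation_map_same_l.
      + apply FinFun.Injective_map_NoDup_in; [|apply nodup_down].
        intros a b Ha Hb. apply in_down in Ha, Hb. apply Hinj; lia.
      + intros j Hj. apply in_map_iff in Hj. destruct Hj as (i & <- & Hi).
        apply in_down in Hi. apply in_down. split. apply Hp1; lia.
        destruct (Nat.le_gt_cases (pi i) n) as [Hle|Hgt]; auto.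
        assert (pi (pi i) = pi i) by (apply HK; lia).
        assert (pi i = i) by (apply Hinj; try lia; apply Hp1; lia). lia.
    - apply Forall_forall. intros j Hj. apply in_map_iff in Hj.
      destruct Hj as (i & <- & Hi). apply in_down in Hi. apply Hp1; lia. }
  intros x y; split; intros H e He N;
  destruct (H e He (Nat.max N K)) as (n & Hn & Hd); exists n; split; try lia;
  rewrite ?Heq in * by lia; auto.
Qed.
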